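(* Let $k$ be a complete non-archimedean valued field of characteristic $p > 0$, and let $r = (r_1,\ldots,r_n)$ be a tuple of positive real numbers. If $[k : k^p] < \infty$, where $k^p:=\{a^p\mid a\in k\}$, then $\Omega_{k\{r^{-1}T\}/k[T]} = 0$.
   Context: $k\{r^{-1}T\} = k\{r_1^{-1}T_1,\ldots,r_n^{-1}T_n\}$ is the Banach $k$-algebra of power series $\sum_{\nu\in\mathbb{Z}_{\ge0}^n} a_\nu T^\nu$, $a_\nu\in k$, with $|a_\nu| r^\nu \to 0$; $k[T]=k[T_1,\ldots,T_n]$. $\Omega_{k\{r^{-1}T\}/k[T]}$ is the module of Kähler differentials. *)

(* Defs.v *)
From HB Require Import structures.
From mathcomp Require Import all_boot all_order all_algebra.
From mathcomp Require Import boolp reals.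
From Stdlib Require List.

Set Implicit Arguments.
Unset Strict Implicit.
Unset Printing Implicit Defensive.

Import Order.TTheory GRing.Theory Num.Theory.
Local Open Scope ring_scope.

Definition nonarch_abs (R : realType) (k : fieldType) (abs : k -> R) : Prop :=
  [/\ forall x : k, 0 <= abs x,
      forall x : k, abs x = 0 <-> x = 0,
      forall x y : k, abs (x * y) = abs x * abs y
    & forall x y : k, abs (x + y) <= Num.max (abs x) (abs y)].

Definition abs_complete (R : realType) (k : fieldType) (abs : k -> R) : Prop :=
  forall u : nat -> k,
    (forall eps : R, 0 < eps -> exists N : nat,
        forall m l : nat, (N <= m)%N -> (N <= l)%N -> abs (u m - u l) < eps) ->
    exists lim : k, forall eps : R, 0 < eps -> exists N : nat,
        forall m : nat, (N <= m)%N -> abs (u m - lim) < eps.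

(* [k : k^p] < oo : k is a finite-dimensional vector space over its subfield
   k^p = {a^p | a in k}, i.e. k is spanned over k^p by finitely many vectors. *)
Definition finite_p_degree (k : fieldType) (p : nat) : Prop :=
  exists (m : nat) (b : 'I_m -> k),
    forall x : k, exists c : 'I_m -> k, x = \sum_(i < m) (c i) ^+ p * b i.

Definition mindex (n : nat) := {ffun 'I_n -> nat}.

Definition pseries (k : fieldType) (n : nat) := mindex n -> k.

Section PowerSeries.
Variables (k : fieldType) (n : nat).

Definition ps0 : pseries k n := fun _ => 0.
Definition ps1 : pseries k n := fun nu => if nu == [ffun _ => 0%N] then 1 else 0.
Definition ps_add (f g : pseries k n) : pseries k n := fun nu => f nu + g nu.
Definition ps_opp (f : pseries k n) : pseries k n := fun nu => - f nu.
(* Cauchy product: (f g)_nu = sum_{mu <= nu} f_mu g_(nu - mu). *)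
Definition ps_mul (f g : pseries k n) : pseries k n := fun nu =>
  \sum_(mu : {ffun 'I_n -> 'I_((\sum_(i < n) nu i).+1)}
          | [forall i, (nat_of_ord (mu i) <= nu i)%N])
     f [ffun i => nat_of_ord (mu i)] * g [ffun i => (nu i - mu i)%N].

Definition is_poly (f : pseries k n) : Prop :=
  exists s : seq (mindex n), forall nu, nu \notin s -> f nu = 0.

End PowerSeries.

(* k{r^{-1}T}: series sum a_nu T^nu with |a_nu| r^nu -> 0 as nu -> oo
   (i.e. for each eps > 0 only finitely many nu have |a_nu| r^nu >= eps). *)
Definition tate_series (R : realType) (k : fieldType) (abs : k -> R)
    (n : nat) (r : 'I_n -> R) (f : pseries k n) : Prop :=
  forall eps : R, 0 < eps -> exists s : seq (mindex n),
    forall nu : mindex n,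
      eps <= abs (f nu) * \prod_(i < n) (r i) ^+ (nu i) -> nu \in s.

(* For a subring A (given by a predicate) of the ring of power series and a
   subring B of A, Omega_{A/B} is the free A-module on the symbols d a (a in A)
   modulo the A-submodule N generated by
     d(a + b) - d a - d b,   d(a b) - a d b - b d a   (a, b in A),
     d c                                              (c in B).
   An element of the free module is represented by its coefficient function
   (generator |-> coefficient). Omega_{A/B} = 0 iff every generator d a lies in
   N, i.e. is an A-linear combination of the relations. *)

Section Kaehler.
Variables (k : fieldType) (n : nat).
Local Notation ps := (pseries k n).

Definition ps_gen (a : ps) : ps -> ps :=
  fun g => if `[< g = a >] then @ps1 k n else @ps0 k n.

Inductive kahler_rel :=
  | RelAdd of ps & ps
  | RelMul of ps & ps
  | RelConst of ps.

Definition rel_vec (x : kahler_rel) : ps -> ps :=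
  match x with
  | RelAdd a b => fun g =>
      ps_add (ps_gen (ps_add a b) g)
             (ps_opp (ps_add (ps_gen a g) (ps_gen b g)))
  | RelMul a b => fun g =>
      ps_add (ps_gen (ps_mul a b) g)
             (ps_opp (ps_add (ps_mul a (ps_gen b g)) (ps_mul b (ps_gen a g))))
  | RelConst c => ps_gen c
  end.

Definition rel_ok (A B : ps -> Prop) (x : kahler_rel) : Prop :=
  match x with
  | RelAdd a b => A a /\ A b
  | RelMul a b => A a /\ A b
  | RelConst c => B c
  end.

Definition kaehler_zero (A B : ps -> Prop) : Prop :=
  forall a : ps, A a ->
    exists l : seq (ps * kahler_rel),
      (forall x, List.In x l -> A x.1 /\ rel_ok A B x.2) /\
      ps_gen a = (fun g => \big[@ps_add k n/@ps0 k n]_(x <- l) ps_mul x.1 (rel_vec x.2 g)).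

End Kaehler.

(* Main.v *)
Require Import Defs.
From HB Require Import structures.
From mathcomp Require Import all_boot all_order all_algebra.
From mathcomp Require Import boolp reals.
From mathcomp Require Import zify ring lra.
Import Order.TTheory GRing.Theory Num.Theory.
Local Open Scope ring_scope.
Set Implicit Arguments.
Unset Strict Implicit.
Unset Printing Implicit Defensive.

Section PSRing.
Variables (k : fieldType) (n : nat).
Local Notation mi := (mindex n).

Definition madd (x y : mi) : mi := [ffun i => (x i + y i)%N].
Definition msub (x y : mi) : mi := [ffun i => (x i - y i)%N].
Definition mle (x y : mi) : bool := [forall i, (x i <= y i)%N].
Definition mzero : mi := [ffun _ => 0%N].

Definition Sbox (nu : mi) : seq mi :=
  [seq [ffun i => nat_of_ord (mu i)] | mu : {ffun 'I_n -> 'I_((\sum_(i < n) nu i).+1)} <- enum (fun mu : {ffun 'I_n -> 'I_((\sum_(i < n) nu i).+1)} => [forall i, (nat_of_ord (mu i) <= nu i)%N])].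

Lemma psmulE (f g : pseries k n) nu :
  ps_mul f g nu = \sum_(mu <- Sbox nu) f mu * g (msub nu mu).
Proof.
rewrite /ps_mul /Sbox big_map big_enum_cond /=.
apply: eq_big => [mu|mu _]; first by rewrite andbT.
by rewrite /msub; congr (_ * g _); apply/ffunP => i; rewrite !ffunE.
Qed.

Lemma mleP (x y : mi) : reflect (forall i, (x i <= y i)%N) (mle x y).
Proof. exact: forallP. Qed.

Lemma memS nu x : (x \in Sbox nu) = mle x nu.
Proof.
apply/idP/idP.
  case/mapP => mu; rewrite mem_enum => /forallP H ->; apply/forallP => i.
  by rewrite ffunE H.
move/mleP => H; apply/mapP.
have Hb : forall i, (x i < (\sum_(j < n) nu j).+1)%N.
  move=> i; rewrite ltnS; apply: leq_trans (H i) _.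
  rewrite (bigD1 i) //=; exact: leq_addr.
exists [ffun i => Ordinal (Hb i)].
  rewrite mem_enum; apply/forallP => i; by rewrite ffunE /= H.
by apply/ffunP => i; rewrite !ffunE.
Qed.

Lemma uniqS nu : uniq (Sbox nu).
Proof.
rewrite map_inj_uniq ?enum_uniq // => x y H; apply/ffunP => i.
move/ffunP: H => /(_ i); rewrite !ffunE => Hi; exact: val_inj.
Qed.


Lemma msubK (x y : mi) : mle y x -> madd y (msub x y) = x.
Proof. by move/mleP => H; apply/ffunP => i; rewrite !ffunE subnKC. Qed.
Lemma msubKK (x y : mi) : mle y x -> msub x (msub x y) = y.
Proof. by move/mleP => H; apply/ffunP => i; rewrite !ffunE subKn. Qed.
Lemma maddK (x y : mi) : msub (madd x y) x = y.
Proof. by apply/ffunP => i; rewrite !ffunE addKn. Qed.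
Lemma msubD (x y z : mi) : msub x (madd y z) = msub (msub x y) z.
Proof. by apply/ffunP => i; rewrite !ffunE subnDA. Qed.
Lemma msub0 (x : mi) : msub x mzero = x.
Proof. by apply/ffunP => i; rewrite !ffunE subn0. Qed.
Lemma mle_sub (x y : mi) : mle (msub x y) x.
Proof. by apply/mleP => i; rewrite !ffunE leq_subr. Qed.
Lemma mle_trans (x y z : mi) : mle x y -> mle y z -> mle x z.
Proof. move=> /mleP H1 /mleP H2; apply/mleP => i; exact: leq_trans (H1 i) (H2 i). Qed.
Lemma mle_refl (x : mi) : mle x x.
Proof. by apply/mleP. Qed.
Lemma mle0 (x : mi) : mle mzero x.
Proof. by apply/mleP => i; rewrite ffunE. Qed.

Lemma perm_sub nu : perm_eq (Sbox nu) [seq msub nu x | x <- Sbox nu].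
Proof.
apply: uniq_perm; first exact: uniqS.
  rewrite map_inj_in_uniq ?uniqS // => x y; rewrite !memS => Hx Hy H.
  by rewrite -(msubKK Hx) H msubKK.
move=> x; rewrite memS; apply/idP/mapP.
  by move=> H; exists (msub nu x); rewrite ?memS ?mle_sub ?msubKK.
by case=> y _ ->; exact: mle_sub.
Qed.

Lemma perm_le nu mu : mle mu nu -> perm_eq (Sbox mu) [seq x <- Sbox nu | mle x mu].
Proof.
move=> H; apply: uniq_perm; first exact: uniqS.
  by rewrite filter_uniq ?uniqS.
move=> x; rewrite mem_filter !memS; apply/idP/idP.
  by move=> Hx; rewrite Hx (mle_trans Hx H).
by case/andP.
Qed.

Lemma perm_ge nu la : mle la nu ->
  perm_eq [seq x <- Sbox nu | mle la x] [seq madd la x | x <- Sbox (msub nu la)].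
Proof.
move=> H; apply: uniq_perm; first by rewrite filter_uniq ?uniqS.
  rewrite map_inj_uniq ?uniqS // => x y E.
  by rewrite -(maddK la x) E maddK.
move=> x; rewrite mem_filter memS; apply/idP/mapP.
  case/andP => H1 H2; exists (msub x la); last by rewrite msubK.
  rewrite memS; apply/mleP => i; move/mleP: H1 => /(_ i); move/mleP: H2 => /(_ i).
  rewrite !ffunE; lia.
case=> y; rewrite memS => /mleP Hy ->; apply/andP; split; apply/mleP => i; rewrite !ffunE.
  by move: (Hy i); move/mleP: H => /(_ i); rewrite !ffunE; lia.
by move: (Hy i); move/mleP: H => /(_ i); rewrite !ffunE; lia.
Qed.

Lemma mem0 nu : mzero \in Sbox nu.
Proof. by rewrite memS mle0. Qed.

Lemma mulC (f g : pseries k n) : ps_mul f g = ps_mul g f.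
Proof.
apply: funext => nu; rewrite !psmulE (perm_big _ (perm_sub nu)) big_map /=.
apply: eq_big_seq => x; rewrite memS => Hx; by rewrite msubKK // mulrC.
Qed.

Lemma mulA (f g h : pseries k n) : ps_mul f (ps_mul g h) = ps_mul (ps_mul f g) h.
Proof.
apply: funext => nu; rewrite !psmulE.
transitivity (\sum_(mu <- Sbox nu) \sum_(la <- Sbox nu) 
   (if mle la mu then f la * g (msub mu la) * h (msub nu mu) else 0)); last first.
  apply: eq_big_seq => mu; rewrite memS => Hmu.
  rewrite psmulE (perm_big _ (perm_le Hmu)) big_filter mulr_suml big_mkcond /=.
  by rewrite [RHS]big_mkcond.
rewrite [RHS]exchange_big /=.
apply: eq_big_seq => la; rewrite memS => Hla.
rewrite psmulE mulr_sumr -[in RHS]big_mkcond /= -[in RHS]big_filter (perm_big _ (perm_ge Hla)) [in RHS]big_map.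
apply: eq_bigr => x _; by rewrite maddK msubD mulrA.
Qed.

Lemma mul1 (f : pseries k n) : ps_mul (@ps1 k n) f = f.
Proof.
apply: funext => nu; rewrite psmulE (bigD1_seq mzero) ?mem0 ?uniqS //=.
rewrite /ps1 eqxx mul1r msub0 big1 ?addr0 // => x Hx.
by rewrite /ps1 (negbTE Hx) mul0r.
Qed.

Lemma mulDl (f g h : pseries k n) : ps_mul (ps_add f g) h = ps_add (ps_mul f h) (ps_mul g h).
Proof.
apply: funext => nu; rewrite /ps_add !psmulE -big_split /=.
by apply: eq_bigr => x _; rewrite mulrDl.
Qed.

End PSRing.

Section PSInst.
Variables (k : fieldType) (n : nat).
Definition PS := pseries k n.
HB.instance Definition _ := Choice.on PS.

Lemma addA : associative (@ps_add k n).
Proof. by move=> f g h; apply: funext => x; rewrite /ps_add addrA. Qed.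
Lemma addC : commutative (@ps_add k n).
Proof. by move=> f g; apply: funext => x; rewrite /ps_add addrC. Qed.
Lemma add0 : left_id (@ps0 k n) (@ps_add k n).
Proof. by move=> f; apply: funext => x; rewrite /ps_add /ps0 add0r. Qed.
Lemma addN : left_inverse (@ps0 k n) (@ps_opp k n) (@ps_add k n).
Proof. by move=> f; apply: funext => x; rewrite /ps_add /ps0 /ps_opp addNr. Qed.

HB.instance Definition _ := GRing.isZmodule.Build PS addA addC add0 addN.

Lemma one_neq0 : (@ps1 k n : PS) != (@ps0 k n).
Proof.
apply/eqP => H; have := congr1 (fun f : PS => f (mzero n)) H.
by rewrite /ps1 /ps0 /mzero eqxx => /eqP; rewrite oner_eq0.
Qed.

HB.instance Definition _ := GRing.Zmodule_isComNzRing.Build PS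
  (@mulA k n) (@mulC k n) (@mul1 k n) (@mulDl k n) one_neq0.

Lemma PSaddE (f g : PS) nu : (f + g) nu = f nu + g nu. Proof. by []. Qed.
Lemma PSoppE (f : PS) nu : (- f) nu = - f nu. Proof. by []. Qed.
Lemma PS0E nu : (0 : PS) nu = 0. Proof. by []. Qed.
Lemma PSmulE (f g : PS) nu : (f * g) nu = ps_mul f g nu. Proof. by []. Qed.
Lemma PSsumE I (r : seq I) (P : pred I) (F : I -> PS) nu :
  (\sum_(i <- r | P i) F i) nu = \sum_(i <- r | P i) F i nu.
Proof. by elim/big_rec2: _ => // i y1 y2 _ <-. Qed.
Lemma PSnatE j nu : ((j%:R : PS) nu) = (j%:R : k) * (@ps1 k n nu).
Proof. elim: j => [|j IH]; first by rewrite mul0r. by rewrite !mulrS PSaddE IH mulrDl mul1r. Qed.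

End PSInst.

Section Mono.
Variables (k : fieldType) (n : nat).
Local Notation mi := (mindex n).
Local Notation PS := (PS k n).

Definition M (c : k) (mu : mi) : PS := fun nu => if nu == mu then c else 0.
Definition mscale (j : nat) (mu : mi) : mi := [ffun i => (j * mu i)%N].

Lemma MmulE c mu (f : PS) nu :
  (M c mu * f) nu = if mle mu nu then c * f (msub nu mu) else 0.
Proof.
rewrite PSmulE psmulE; case: ifP => H.
  rewrite (bigD1_seq mu) ?memS ?uniqS //= /M eqxx big1 ?addr0 // => x Hx.
  by rewrite (negbTE Hx) mul0r.
rewrite big_seq big1 // => x; rewrite memS /M; case: eqP => [->|]; first by rewrite H.
by rewrite mul0r.
Qed.

Lemma MM c d mu la : M c mu * M d la = M (c * d) (madd mu la).
Proof.
apply: funext => nu; rewrite MmulE {2}/M.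
case: ifP => H.
  rewrite /M; have [E|E] := eqVneq (msub nu mu) la; have [E'|E'] := eqVneq nu (madd mu la); rewrite ?mulr0 //.
  - by move: E'; rewrite -E msubK ?eqxx.
  - by move: E; rewrite E' maddK eqxx.
case: eqP => // E; rewrite E in H; move: H.
suff -> : mle mu (madd mu la) by [].
by apply/mleP => i; rewrite ffunE leq_addr.
Qed.

Lemma M1 : M 1 (mzero n) = 1.
Proof. by []. Qed.

Lemma MX c mu j : M c mu ^+ j = M (c ^+ j) (mscale j mu).
Proof.
elim: j => [|j IH].
  rewrite expr0 -M1; congr M; apply/ffunP => i; by rewrite !ffunE.
rewrite exprS IH MM exprS; congr M; apply/ffunP => i; rewrite !ffunE; lia.
Qed.

Lemma vanish_mul (f h : PS) nu : (forall mu, mle mu nu -> f mu = 0) -> (f * h) nu = 0.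
Proof.
move=> H; rewrite PSmulE psmulE big_seq big1 // => x; rewrite memS => Hx.
by rewrite H // mul0r.
Qed.

Definition trunc (g : PS) nu : PS := \sum_(mu <- Sbox nu) M (g mu) mu.

Lemma truncE (g : PS) nu la : mle la nu -> trunc g nu la = g la.
Proof.
move=> H; rewrite /trunc PSsumE (bigD1_seq la) ?memS ?uniqS //= /M eqxx big1 ?addr0 //.
by move=> x Hx; rewrite eq_sym (negbTE Hx).
Qed.

Definition mdiv (p : nat) (la : mi) : mi := [ffun i => (la i %/ p)%N].

Lemma pchar_PS p : p \in [pchar k] -> p \in [pchar PS].
Proof.
move=> Hp; have := Hp; rewrite !inE => /andP [-> /eqP H] /=; apply/eqP.
apply: funext => nu; by rewrite PSnatE H mul0r.
Qed.

Lemma frob_sum p (g : PS) nu : p \in [pchar k] ->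
  (g ^+ p) nu = \sum_(mu <- Sbox nu) (if nu == mscale p mu then g mu ^+ p else 0).
Proof.
move=> Hp; have HpS := pchar_PS Hp.
have p0 : (0 < p)%N by apply: prime_gt0; exact: pcharf_prime Hp.
have E : g = trunc g nu + (g - trunc g nu) by rewrite addrC subrK.
rewrite [in LHS]E.
rewrite exprDn_pchar; last by rewrite pnatE ?(pcharf_prime Hp).
rewrite PSaddE.
have -> : ((g - trunc g nu) ^+ p) nu = 0.
  rewrite -(prednK p0) exprS vanish_mul // => mu Hmu.
  by rewrite PSaddE PSoppE truncE // subrr.
have := pFrobenius_autE HpS (trunc g nu) => /= <-.
rewrite addr0 /trunc rmorph_sum PSsumE.
apply: eq_bigr => mu _.
change ((M (g mu) mu ^+ p) nu = (if nu == mscale p mu then g mu ^+ p else 0)); by rewrite MX.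
Qed.

Lemma mdiv_scale p mu : (0 < p)%N -> mdiv p (mscale p mu) = mu.
Proof. by move=> p0; apply/ffunP => i; rewrite !ffunE mulKn. Qed.

Lemma frobE p (g : PS) la : p \in [pchar k] ->
  (g ^+ p) la = if la == mscale p (mdiv p la) then g (mdiv p la) ^+ p else 0.
Proof.
move=> Hp; have p0 : (0 < p)%N by apply: prime_gt0; exact: pcharf_prime Hp.
rewrite frob_sum //; case: ifP => E.
  rewrite (bigD1_seq (mdiv p la)) ?memS ?uniqS //=; last first.
    by apply/mleP => i; rewrite ffunE leq_div.
  rewrite E big1 ?addr0 // => mu Hmu; case: ifP => // /eqP E2.
  by move: Hmu; rewrite E2 mdiv_scale // eqxx.
rewrite big1 // => mu _; case: ifP => // /eqP E2.
by move: E; rewrite E2 mdiv_scale // eqxx.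
Qed.

Lemma nat_aux p v a q : (0 < p)%N -> (a <= p.-1)%N -> (a <= v)%N -> (v - a = p * q)%N -> a = (v %% p)%N.
Proof.
move=> p0 Ha Hav E; have -> : v = (q * p + a)%N by lia.
rewrite modnMDl modn_small //; lia.
Qed.

Lemma decomp p m (b : 'I_m -> k) (c : 'I_m -> k -> k) (a : PS) :
  p \in [pchar k] -> (forall x, x = \sum_(j < m) c j x ^+ p * b j) ->
  a = \sum_(j < m) \sum_(al <- Sbox [ffun _ => p.-1])
        M (b j) al * ((fun mu => c j (a (madd (mscale p mu) al))) : PS) ^+ p.
Proof.
move=> Hp Hc; have p0 : (0 < p)%N by apply: prime_gt0; exact: pcharf_prime Hp.
apply: funext => nu; rewrite PSsumE [LHS]Hc; apply: eq_bigr => j _.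
rewrite PSsumE.
pose a0 : mi := [ffun i => (nu i %% p)%N].
have Ha0 : mle a0 nu by apply/mleP => i; rewrite ffunE leq_mod.
have Hs : msub nu a0 = mscale p (mdiv p nu).
  apply/ffunP => i; rewrite !ffunE {1}(divn_eq (nu i) p) addnK mulnC //.
rewrite (bigD1_seq a0) ?memS ?uniqS //=; last first.
  apply/mleP => i; rewrite !ffunE -ltnS prednK // ltn_mod //.
rewrite big_seq_cond big1 ?addr0; last first.
  move=> al /andP [Hal Hne]; rewrite MmulE; case: ifP => // Hle.
  rewrite frobE //; case: ifP => [/eqP E|]; last by rewrite mulr0.
  move: Hne; suff -> : al = a0 by rewrite eqxx.
  apply/ffunP => i; rewrite ffunE; apply: (@nat_aux p _ _ (mdiv p (msub nu al) i)) => //.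
  - by move: Hal; rewrite memS => /mleP /(_ i); rewrite ffunE.
  - by move/mleP: Hle.
  - by move/ffunP: E => /(_ i); rewrite !ffunE.
rewrite MmulE Ha0 frobE // Hs mdiv_scale // eqxx.
suff -> : madd (mscale p (mdiv p nu)) a0 = nu by rewrite mulrC.
apply/ffunP => i; rewrite !ffunE; rewrite {3}(divn_eq (nu i) p) mulnC //.
Qed.

End Mono.

Section Kah.
Variables (k : fieldType) (n : nat).
Local Notation PS := (PS k n).
Variables (A B : PS -> Prop).
Hypotheses (A0 : A (0 : PS)) (A1 : A (1 : PS)) (AD : forall x y : PS, A x -> A y -> A (x + y))
  (AM : forall x y : PS, A x -> A y -> A (x * y)) (AN : forall x : PS, A x -> A (- x))
  (B0 : B (0 : PS)).

Definition inN (v : pseries k n -> PS) := exists l : seq (pseries k n * kahler_rel k n),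
  (forall x, List.In x l -> A x.1 /\ rel_ok A B x.2) /\
  v = (fun g => \sum_(x <- l) ((x.1 : PS) * (rel_vec x.2 g : PS))).

Lemma inN_ext v w : (forall g, v g = w g) -> inN v -> inN w.
Proof. by move=> H; have -> : w = v by apply: funext => g; rewrite H. Qed.

Lemma inN0 : inN (fun _ => 0).
Proof. by exists [::]; split => //; apply: funext => g; rewrite big_nil. Qed.

Lemma inND v w : inN v -> inN w -> inN (fun g => v g + w g).
Proof.
move=> [l1 [H1 ->]] [l2 [H2 ->]]; exists (l1 ++ l2); split.
  by move=> x Hx; case: (List.in_app_or _ _ _ Hx) => ?; [apply: H1 | apply: H2].
by apply: funext => g; rewrite big_cat.
Qed.

Lemma inNZ c v : A c -> inN v -> inN (fun g => c * v g).
Proof.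
move=> Ac [l [H ->]]; exists [seq (c * x.1 : pseries k n, x.2) | x <- l]; split.
  move=> x /List.in_map_iff [y [<- Hy]] /=; have [Hy1 Hy2] := H y Hy; split => //.
  exact: AM.
by apply: funext => g; rewrite big_map mulr_sumr; apply: eq_bigr => x _; rewrite mulrA.
Qed.

Lemma inNrel x : rel_ok A B x -> inN (rel_vec x).
Proof.
move=> Hx; exists [:: ((1 : PS) : pseries k n, x)]; split.
  by move=> y [<-|[]].
by apply: funext => g; rewrite big_seq1 mul1r.
Qed.

Definition E (a : PS) (g : pseries k n) : PS := ps_gen a g.

Lemma N_add a b : A a -> A b -> inN (fun g => E (a + b : PS) g - (E a g + E b g)).
Proof. move=> Ha Hb; exact: (inNrel (x := RelAdd a b)). Qed.

Lemma N_mul a b : A a -> A b -> inN (fun g => E (a * b : PS) g - ((a : PS) * E b g + (b : PS) * E a g)).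
Proof. move=> Ha Hb; exact: (inNrel (x := RelMul a b)). Qed.

Lemma N_const c : B c -> inN (E c).
Proof. move=> Hc; exact: (inNrel (x := RelConst c)). Qed.

Lemma AX (h : PS) j : A h -> A (h ^+ j).
Proof. move=> Ah; elim: j => [|j IH]; first by rewrite expr0. by rewrite exprS; apply: AM. Qed.

Lemma N_pow (h : PS) j : A h -> inN (fun g => E (h ^+ j.+1) g - (j.+1)%:R * h ^+ j * E h g).
Proof.
move=> Ah; elim: j => [|j IH].
  apply: inN_ext inN0 => g; rewrite expr1 expr0 mulr1 mul1r subrr //.
have H1 := N_mul Ah (AX j.+1 Ah).
have H2 := inNZ Ah IH.
apply: inN_ext (inND H1 H2) => g.
rewrite [h ^+ j.+2]exprS.
set e1 := E _ g; set e2 := E _ g; set e3 := E h g.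
rewrite !mulrS -!/(_ %:R) exprS. ring.
Qed.

Lemma N_p p (h : PS) : p \in [pchar k] -> A h -> inN (E (h ^+ p)).
Proof.
move=> Hp Ah; have p0 : (0 < p)%N by apply: prime_gt0; exact: pcharf_prime Hp.
have Hz : (p%:R : PS) = 0.
  apply: funext => nu; rewrite PSnatE; have := Hp; rewrite inE => /andP [_ /eqP ->].
  by rewrite mul0r.
apply: inN_ext (N_pow p.-1 Ah) => g; rewrite prednK // Hz !mul0r subr0. done.
Qed.

Lemma N_term p (q h : PS) : p \in [pchar k] -> A q -> B q -> A h -> inN (E (q * h ^+ p)).
Proof.
move=> Hp Aq Bq Ah; have Ahp := AX p Ah.
apply: inN_ext (inND (N_mul Aq Ahp) (inND (inNZ Aq (N_p Hp Ah)) (inNZ Ahp (N_const Bq)))) => g.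
by rewrite subrK.
Qed.

Lemma N_sum I (r : seq I) (P : pred I) (F : I -> PS) :
  (forall i, P i -> A (F i) /\ inN (E (F i))) ->
  A (\sum_(i <- r | P i) F i) /\ inN (E (\sum_(i <- r | P i) F i)).
Proof.
move=> H; apply: (big_ind (fun t => A t /\ inN (E t))) => //.
  by split => //; apply: N_const.
move=> x y [Ax Nx] [Ay Ny]; split; first exact: AD.
by apply: inN_ext (inND (N_add Ax Ay) (inND Nx Ny)) => g; rewrite subrK.
Qed.

End Kah.

Section Abs.
Variables (R : realType) (k : fieldType) (abs : k -> R).
Hypothesis Habs : nonarch_abs abs.

Lemma abs_ge0 x : 0 <= abs x. Proof. by case: Habs. Qed.
Lemma abs_eq0 x : abs x = 0 <-> x = 0. Proof. by case: Habs. Qed.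
Lemma absM x y : abs (x * y) = abs x * abs y. Proof. by case: Habs. Qed.
Lemma absD x y : abs (x + y) <= Num.max (abs x) (abs y). Proof. by case: Habs. Qed.
Lemma abs0 : abs 0 = 0. Proof. by apply/abs_eq0. Qed.
Lemma abs1 : abs 1 = 1.
Proof.
have h := absM 1 1; rewrite mulr1 in h.
have nz : abs 1 != 0 by apply/eqP => /abs_eq0 /eqP; rewrite oner_eq0.
by apply: (mulfI nz); rewrite mulr1 -h.
Qed.
Lemma absN x : abs (- x) = abs x.
Proof.
have h : abs (-1) * abs (-1) = 1 by rewrite -absM mulrNN mulr1 abs1.
have h1 : abs (-1) = 1.
  have : (abs (-1)) ^+ 2 == 1 by rewrite expr2 h.
  rewrite sqrf_eq1 => /orP [/eqP //| /eqP E].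
  by have := abs_ge0 (-1); rewrite E; lra.
by rewrite -mulN1r absM h1 mul1r.
Qed.
Lemma absX x j : abs (x ^+ j) = abs x ^+ j.
Proof. elim: j => [|j IH]; by rewrite ?expr0 ?abs1 // !exprS absM IH. Qed.
Lemma absB x y : abs (x - y) = abs (y - x).
Proof. by rewrite -absN opprB. Qed.
Lemma abs_lt_add x y e : abs x < e -> abs y < e -> abs (x + y) < e.
Proof. move=> hx hy; apply: le_lt_trans (absD x y) _; by rewrite gt_max hx hy. Qed.
Lemma abs_le_add x y e : abs x <= e -> abs y <= e -> abs (x + y) <= e.
Proof. move=> hx hy; apply: le_trans (absD x y) _; by rewrite ge_max hx hy. Qed.
Lemma abs_sum_lt I (r : seq I) (P : pred I) (F : I -> k) e : 0 < e ->
  (forall i, P i -> abs (F i) < e) -> abs (\sum_(i <- r | P i) F i) < e.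
Proof.
move=> e0 H; apply: (big_ind (fun x => abs x < e)) => //; first by rewrite abs0.
move=> x y hx hy; exact: (abs_lt_add hx hy).
Qed.
Lemma abs_sum_le I (r : seq I) (P : pred I) (F : I -> k) e : 0 <= e ->
  (forall i, P i -> abs (F i) <= e) -> abs (\sum_(i <- r | P i) F i) <= e.
Proof.
move=> e0 H; apply: (big_ind (fun x => abs x <= e)) => //; first by rewrite abs0.
move=> x y hx hy; exact: (abs_le_add hx hy).
Qed.

End Abs.

Section Tate.
Variables (R : realType) (k : fieldType) (abs : k -> R).
Hypothesis Habs : nonarch_abs abs.
Variables (n : nat) (r : 'I_n -> R).
Hypothesis Hr : forall i, 0 < r i.
Local Notation PS := (PS k n).
Local Notation tate := (tate_series abs r).

Definition rho (nu : mindex n) : R := \prod_(i < n) r i ^+ nu i.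

Lemma rho_gt0 nu : 0 < rho nu.
Proof. by apply: prodr_gt0 => i _; apply: exprn_gt0. Qed.

Lemma rho_add x y : rho (madd x y) = rho x * rho y.
Proof. by rewrite /rho -big_split; apply: eq_bigr => i _; rewrite ffunE exprD. Qed.

Lemma rho_scale p mu : rho (mscale p mu) = rho mu ^+ p.
Proof. by rewrite /rho -prodrXl; apply: eq_bigr => i _; rewrite ffunE mulnC exprM. Qed.

Lemma tate_out (f : PS) eps : tate f -> 0 < eps ->
  exists s : seq (mindex n), forall nu, nu \notin s -> abs (f nu) * rho nu < eps.
Proof.
move=> Hf e0; have [s Hs] := Hf eps e0; exists s => nu Hnu.
by rewrite ltNge; apply/negP => H; move: Hnu; rewrite (Hs nu H).
Qed.

Lemma tate_in (f : PS) : (forall eps, 0 < eps ->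
  exists s : seq (mindex n), forall nu, nu \notin s -> abs (f nu) * rho nu < eps) -> tate f.
Proof.
move=> H eps e0; have [s Hs] := H eps e0; exists s => nu Hnu.
case: (boolP (nu \in s)) => // /Hs; rewrite /rho; lra.
Qed.

Lemma tate_bound (f : PS) : tate f -> exists M, 0 < M /\ forall nu, abs (f nu) * rho nu <= M.
Proof.
move=> Hf; have [s Hs] := tate_out Hf (@ltr01 R).
exists (1 + \sum_(x <- s) abs (f x) * rho x); split.
  have : 0 <= \sum_(x <- s) abs (f x) * rho x.
    by apply: sumr_ge0 => x _; apply: mulr_ge0; [exact: abs_ge0 | exact: ltW (rho_gt0 x)].
  lra.
move=> nu; case: (boolP (nu \in s)) => H.
  rewrite (big_rem nu H) /=.
  have : 0 <= \sum_(x <- rem nu s) abs (f x) * rho x.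
    by apply: sumr_ge0 => x _; apply: mulr_ge0; [exact: abs_ge0 | exact: ltW (rho_gt0 x)].
  lra.
have := Hs nu H.
have : 0 <= \sum_(x <- s) abs (f x) * rho x.
  by apply: sumr_ge0 => x _; apply: mulr_ge0; [exact: abs_ge0 | exact: ltW (rho_gt0 x)].
lra.
Qed.

Lemma tate_poly (f : PS) : is_poly f -> tate f.
Proof.
move=> [s Hs] eps e0; exists s => nu H; case: (boolP (nu \in s)) => // /Hs E.
by move: H; rewrite E abs0 // mul0r; lra.
Qed.

Lemma tate_add (f g : PS) : tate f -> tate g -> tate (f + g).
Proof.
move=> Hf Hg; apply: tate_in => eps e0.
have [s1 H1] := tate_out Hf e0; have [s2 H2] := tate_out Hg e0.
exists (s1 ++ s2) => nu; rewrite mem_cat negb_or => /andP [n1 n2].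
have := H1 _ n1; have := H2 _ n2; rewrite PSaddE => h2 h1.
have hr := rho_gt0 nu.
apply: le_lt_trans (ler_wpM2r (ltW hr) (absD Habs (f nu) (g nu))) _.
by rewrite maxr_pMl ?gt_max ?h1 ?h2 // ltW.
Qed.

Lemma tate_opp (f : PS) : tate f -> tate (- f).
Proof.
move=> Hf eps e0; have [s Hs] := Hf eps e0; exists s => nu; rewrite PSoppE absN //; exact: Hs.
Qed.

Lemma tate_mul (f g : PS) : tate f -> tate g -> tate (f * g).
Proof.
move=> Hf Hg; have [Mf [Mf0 HMf]] := tate_bound Hf; have [Mg [Mg0 HMg]] := tate_bound Hg.
apply: tate_in => eps e0.
have [s1 H1] := tate_out Hf (divr_gt0 e0 Mg0); have [s2 H2] := tate_out Hg (divr_gt0 e0 Mf0).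
exists [seq madd x y | x <- s1, y <- s2] => nu Hnu.
have hr := rho_gt0 nu.
rewrite -ltr_pdivlMr // PSmulE psmulE big_seq.
apply: abs_sum_lt => //; first exact: divr_gt0.
move=> mu; rewrite memS => Hmu.
rewrite ltr_pdivlMr // absM.
have E : rho nu = rho mu * rho (msub nu mu) by rewrite -rho_add msubK.
rewrite E.
set X := abs (f mu) * rho mu; set Y := abs (g (msub nu mu)) * rho (msub nu mu).
have -> : abs (f mu) * abs (g (msub nu mu)) * (rho mu * rho (msub nu mu)) = X * Y.
  by rewrite /X /Y; ring.
have X0 : 0 <= X by apply: mulr_ge0; [exact: abs_ge0 | exact: ltW (rho_gt0 _)].
have Y0 : 0 <= Y by apply: mulr_ge0; [exact: abs_ge0 | exact: ltW (rho_gt0 _)].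
have XM : X <= Mf := HMf mu.
have YM : Y <= Mg := HMg _.
case: (boolP (mu \in s1)) => Hm1.
  have Hm2 : msub nu mu \notin s2.
    apply/negP => Hm2; move: Hnu; rewrite -(msubK Hmu).
    by rewrite (allpairs_f (@madd n) Hm1 Hm2).
  have := H2 _ Hm2; rewrite -/Y ltr_pdivlMr // => HY.
  nra.
have := H1 _ Hm1; rewrite -/X ltr_pdivlMr // => HX.
nra.
exact: Habs. Qed.

Lemma tate_M c (mu : mindex n) : tate (M c mu).
Proof.
apply: tate_poly; exists [:: mu] => nu; rewrite inE /M => /negbTE -> //.
Qed.

Lemma tate_one : tate (1 : PS).
Proof. rewrite -M1; exact: tate_M. Qed.

Lemma tate_zero : tate (0 : PS).
Proof. apply: tate_poly; by exists [::]. Qed.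

End Tate.

Section Decomp.
Variables (R : realType) (k : fieldType) (abs : k -> R) (p : nat).
Hypotheses (Habs : nonarch_abs abs) (Hcomp : abs_complete abs) (Hp : p \in [pchar k]).

Lemma p_gt0 : (0 < p)%N.
Proof. by apply: prime_gt0; exact: pcharf_prime Hp. Qed.

Lemma frobD (x y : k) : (x + y) ^+ p = x ^+ p + y ^+ p.
Proof. exact: (rmorphD (pFrobenius_aut Hp) x y). Qed.
Lemma frobN (x : k) : (- x) ^+ p = - x ^+ p.
Proof. exact: (rmorphN (pFrobenius_aut Hp) x). Qed.
Lemma frobB (x y : k) : (x - y) ^+ p = x ^+ p - y ^+ p.
Proof. by rewrite frobD frobN. Qed.
Lemma frob0 : (0 : k) ^+ p = 0.
Proof. by rewrite expr0n eqn0Ngt p_gt0. Qed.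

Definition spanb m (b : 'I_m -> k) (x : k) :=
  exists c : 'I_m -> k, x = \sum_(i < m) c i ^+ p * b i.

Definition bounded m (b : 'I_m -> k) (C : R) :=
  forall x, spanb b x -> exists c : 'I_m -> k,
    x = \sum_(i < m) c i ^+ p * b i /\ forall i, abs (c i) ^+ p <= C * abs x.

Lemma spanB m (b : 'I_m -> k) x y : spanb b x -> spanb b y -> spanb b (x - y).
Proof.
move=> [c ->] [d ->]; exists (fun i => c i - d i).
rewrite -sumrB; apply: eq_bigr => i _; by rewrite frobB mulrBl.
Qed.

Lemma spanZ m (b : 'I_m -> k) x (c : k) : c != 0 -> spanb b x -> spanb b (x / c ^+ p).
Proof.
move=> c0 [d ->]; exists (fun i => d i / c); rewrite mulr_suml.
apply: eq_bigr => i _; rewrite exprMn exprVn; ring.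
Qed.

Lemma absX_lt1 (x : R) : 0 <= x -> x <= 1 -> x ^+ p <= x.
Proof.
move=> x0 x1; rewrite -(prednK p_gt0) exprS.
by apply: ler_piMr => //; apply: exprn_ile1.
Qed.

Lemma closed_dist m (b : 'I_m -> k) C (bm : k) : 0 < C -> bounded b C -> ~ spanb b bm ->
  exists dl, 0 < dl /\ forall y, spanb b y -> dl <= abs (bm + y).
Proof.
move=> C0 Hb Hn.
case: (pselect (exists dl : R, 0 < dl /\ forall y, spanb b y -> dl <= abs (bm + y))) => // Hd.
exfalso; apply: Hn.
have Hs : forall s : nat, exists y, spanb b y /\ abs (bm + y) < (s.+1%:R)^-1.
  move=> s; case: (pselect (exists y, spanb b y /\ abs (bm + y) < (s.+1%:R)^-1)) => // Hy.
  exfalso; apply: Hd; exists (s.+1%:R)^-1; split; first by rewrite invr_gt0 ltr0Sn.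
  move=> y Hy'; rewrite leNgt; apply/negP => H; apply: Hy; by exists y.
have [y Hy] := choice Hs.
have [d0 [Hd0 _]] := Hb (y 0%N) (Hy 0%N).1.
have He : forall s : nat, exists e : 'I_m -> k, y s.+1 - y s = \sum_(i < m) e i ^+ p * b i /\
    forall i, abs (e i) ^+ p <= C * abs (y s.+1 - y s).
  move=> s; apply: Hb; apply: spanB; [exact: (Hy s.+1).1 | exact: (Hy s).1].
have [e He'] := choice He.
pose d (s : nat) (i : 'I_m) := d0 i + \sum_(t < s) e t i.
have dE : forall s, y s = \sum_(i < m) d s i ^+ p * b i.
  elim=> [|s IH].
    rewrite Hd0; apply: eq_bigr => i _; by rewrite /d big_ord0 addr0.
  have -> : y s.+1 = y s + (y s.+1 - y s) by rewrite addrC subrK.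
  rewrite (He' s).1 IH -big_split /=; apply: eq_bigr => i _.
  by rewrite /d big_ord_recr /= addrA (frobD (d0 i + _) (e s i)) mulrDl.
have ysmall : forall s, abs (y s.+1 - y s) < (s.+1%:R)^-1.
  move=> s; have -> : y s.+1 - y s = (bm + y s.+1) - (bm + y s) by ring.
  apply: (abs_lt_add Habs); rewrite ?(absN Habs).
  - apply: lt_trans (Hy s.+1).2 _; rewrite ltf_pV2 ?ltr_nat ?posrE ?ltr0Sn //.
  - exact: (Hy s).2.
have esmall : forall eps, 0 < eps -> exists N, forall s, (N <= s)%N -> forall i, abs (e s i) < eps.
  move=> eps e0; have ep0 : 0 < eps ^+ p by apply: exprn_gt0.
  exists (Num.Def.archi_bound (C / eps ^+ p)) => s Hsn i.
  have h1 := (He' s).2 i; have h2 := ysmall s.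
  have h3 : C / eps ^+ p < s.+1%:R.
    apply: lt_le_trans (archi_boundP _) _; first by apply: ltW; apply: divr_gt0.
    by rewrite ler_nat; apply: leq_trans Hsn _.
  have t0 : 0 < (s.+1%:R : R) by rewrite ltr0Sn.
  rewrite ltr_pdivrMr // in h3.
  have h4 : C * abs (y s.+1 - y s) < C * (s.+1%:R)^-1 by rewrite ltr_pM2l.
  have h5 : C * (s.+1%:R)^-1 < eps ^+ p by rewrite -/(C / _) ltr_pdivrMr // mulrC.
  rewrite -(ltr_pXn2r p_gt0) ?nnegrE ?(abs_ge0 Habs) ?ltW // -(absX Habs).
  rewrite (absX Habs); apply: le_lt_trans h1 _; exact: lt_trans h4 h5.
have cauchy : forall i eps, 0 < eps -> exists N, forall a c, (N <= a)%N -> (N <= c)%N ->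
    abs (d a i - d c i) < eps.
  move=> i eps e0; have [N HN] := esmall eps e0; exists N.
  suff H : forall a c, (N <= a)%N -> (a <= c)%N -> abs (d a i - d c i) < eps.
    move=> a c Ha Hc; case: (leqP a c) => h; first exact: H.
    by rewrite (absB Habs); apply: H => //; apply: ltnW.
  move=> a c Ha Hac; rewrite (absB Habs) /d.
  have -> : d0 i + \sum_(t < c) e t i - (d0 i + \sum_(t < a) e t i) = \sum_(a <= t < c) e t i.
    rewrite -(big_mkord xpredT (fun t => e t i)) -(big_mkord xpredT (fun t => e t i)) (@big_cat_nat _ _ _ a 0%N c) // /=; ring.
  rewrite big_nat_cond; apply: (abs_sum_lt Habs) => // t /andP [/andP [h1 _] _].
  by apply: HN; apply: leq_trans h1.
have Hlim : forall i, exists L, forall eps, 0 < eps -> exists N, forall s, (N <= s)%N -> abs (d s i - L) < eps.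
  move=> i; exact: (Hcomp (cauchy i)).
have [L HL] := choice Hlim.
pose z := \sum_(i < m) L i ^+ p * b i.
case: (eqVneq (bm + z) 0) => [Ez|Nz].
  have -> : bm = - z by apply/eqP; rewrite -addr_eq0 Ez.
  exists (fun i => - L i); rewrite /z -sumrN; apply: eq_bigr => i _; by rewrite frobN mulNr.
exfalso.
pose eta := abs (bm + z).
have eta0 : 0 < eta.
  rewrite lt_def (abs_ge0 Habs) andbT; apply/eqP => /(abs_eq0 Habs) E; by rewrite E eqxx in Nz.
pose B := 1 + \sum_(i < m) abs (b i).
have B0 : forall i, abs (b i) <= B - 1.
  move=> i; rewrite /B (bigD1 i) //=; have : 0 <= \sum_(j < m | j != i) abs (b j) by apply: sumr_ge0 => j _; exact: abs_ge0.
  lra.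
have Bpos : 0 < B.
  have : 0 <= \sum_(i < m) abs (b i) by apply: sumr_ge0 => j _; exact: abs_ge0.
  rewrite /B; lra.
pose eps1 := Num.min 1 (eta / B).
have eps10 : 0 < eps1 by rewrite lt_min ltr01 divr_gt0.
have HN : forall i, exists N, forall s, (N <= s)%N -> abs (d s i - L i) < eps1.
  by move=> i; apply: HL.
have [Nf HNf] := choice HN.
pose N := (\max_(i < m) Nf i + Num.Def.archi_bound (eta^-1))%N.
have h1 : abs (bm + y N) < eta.
  apply: lt_le_trans (Hy N).2 _.
  have t0 : 0 < (N.+1%:R : R) by rewrite ltr0Sn.
  have ei0 : 0 < eta^-1 by rewrite invr_gt0.
  have h := archi_boundP (ltW ei0).
  have h' : ((Num.Def.archi_bound eta^-1)%:R : R) <= N.+1%:R.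
    by rewrite ler_nat /N; apply: leq_trans (leq_addl _ _) (leqnSn _).
  have h2 : eta^-1 < N.+1%:R := lt_le_trans h h'.
  rewrite -(invrK eta) lef_pV2 ?posrE ?invr_gt0 //; exact: ltW.
have h2 : abs (z - y N) < eta.
  rewrite (dE N) /z -sumrB; apply: (abs_sum_lt Habs) => // i _.
  rewrite -mulrBl -frobB (absM Habs) (absX Habs) (absB Habs).
  have hs := HNf i N (leq_trans (@leq_bigmax _ Nf i) (leq_addr _ _)).
  have a0 := abs_ge0 Habs (d N i - L i).
  have hb := B0 i; have hb0 := abs_ge0 Habs (b i).
  have hle1 : abs (d N i - L i) <= 1 by apply: ltW; apply: lt_le_trans hs _; rewrite ge_min lexx.
  have hx := absX_lt1 a0 hle1.
  have hlt : abs (d N i - L i) < eta / B by apply: lt_le_trans hs _; rewrite ge_min lexx orbT.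
  rewrite ltr_pdivlMr // in hlt.
  have : abs (d N i - L i) ^+ p * abs (b i) <= abs (d N i - L i) * B.
    apply: ler_pM => //; first exact: exprn_ge0.
    lra.
  lra.
have := abs_lt_add Habs h1 h2.
have -> : bm + y N + (z - y N) = bm + z by ring.
by rewrite -/eta ltxx.
Qed.

Lemma bounded_ex m (b : 'I_m -> k) : exists C, 0 < C /\ bounded b C.
Proof.
have p0 := p_gt0.
elim: m b => [|m IH] b.
  exists 1; split => //; move=> x [c ->]; exists c; split => //; by case.
pose b' := fun i : 'I_m => b (widen_ord (leqnSn m) i).
pose bm := b ord_max.
have [C' [C0 HC]] := IH b'.
have split_sum : forall c : 'I_m.+1 -> k, \sum_(i < m.+1) c i ^+ p * b i =
    \sum_(i < m) c (widen_ord (leqnSn m) i) ^+ p * b' i + c ord_max ^+ p * bm.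
  by move=> c; rewrite big_ord_recr.
pose ext (d : 'I_m -> k) (cm : k) : 'I_m.+1 -> k :=
  fun i => if unlift ord_max i is Some j then d j else cm.
have extE1 : forall d cm i, ext d cm (widen_ord (leqnSn m) i) = d i.
  move=> d cm i; have -> : widen_ord (leqnSn m) i = lift ord_max i.
    by apply: val_inj; rewrite /= /bump leqNgt ltn_ord.
  by rewrite /ext liftK.
have extE2 : forall d cm, ext d cm ord_max = cm by move=> d cm; rewrite /ext unlift_none.
have ext_sum : forall d cm, \sum_(i < m.+1) ext d cm i ^+ p * b i =
    \sum_(i < m) d i ^+ p * b' i + cm ^+ p * bm.
  move=> d cm; rewrite split_sum extE2; congr (_ + _); apply: eq_bigr => i _; by rewrite extE1.
have ax0 := abs_ge0 Habs.
case: (pselect (spanb b' bm)) => [[g Hg]|Hn].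
  exists C'; split => // x [c Hx].
  have Hx' : spanb b' x.
    exists (fun i => c (widen_ord (leqnSn m) i) + c ord_max * g i).
    rewrite Hx split_sum Hg mulr_sumr -big_split; apply: eq_bigr => i _.
    by rewrite frobD exprMn mulrDl mulrA.
  have [d [Hd Hdb]] := HC x Hx'.
  exists (ext d 0); split; first by rewrite ext_sum frob0 mul0r addr0.
  move=> i; rewrite /ext; case: unlift => [j|]; first exact: Hdb.
  rewrite (abs0 Habs) expr0n eqn0Ngt p0 /=; exact: mulr_ge0 (ltW C0) (ax0 x).
have [dl [dl0 Hdl]] := closed_dist C0 HC Hn.
have u0 : 0 < dl^-1 by rewrite invr_gt0.
exists (dl^-1 + C' * (1 + abs bm * dl^-1)); split.
  apply: addr_gt0 => //; apply: mulr_gt0 => //; have := mulr_ge0 (ax0 bm) (ltW u0); lra.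
move=> x [c Hx].
pose cm := c ord_max.
pose y := \sum_(i < m) c (widen_ord (leqnSn m) i) ^+ p * b' i.
have Hy : spanb b' y by exists (fun i => c (widen_ord (leqnSn m) i)).
have Hxy : x = y + cm ^+ p * bm by rewrite Hx split_sum.
have Hcm : abs cm ^+ p * dl <= abs x.
  case: (eqVneq cm 0) => [->|cm0].
    by rewrite (abs0 Habs) expr0n eqn0Ngt p0 /= mul0r.
  have cp0 : cm ^+ p != 0 by apply: expf_neq0.
  have -> : x = cm ^+ p * (bm + y / cm ^+ p) by rewrite Hxy; field.
  rewrite (absM Habs) (absX Habs); apply: ler_wpM2l; first exact: exprn_ge0.
  by apply: Hdl; apply: spanZ.
have Hyb : abs y <= abs x + abs cm ^+ p * abs bm.
  have -> : y = x + - (cm ^+ p * bm) by rewrite Hxy; ring.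
  apply: le_trans (absD Habs _ _) _; rewrite (absN Habs) (absM Habs) (absX Habs) ge_max.
  have := ax0 x; have := ax0 bm; have := exprn_ge0 p (ax0 cm).
  move=> h1 h2 h3; apply/andP; split; nra.
have [d [Hd Hdb]] := HC y Hy.
exists (ext d cm); split; first by rewrite ext_sum -Hd -Hxy.
have PQ : abs cm ^+ p <= abs x * dl^-1 by rewrite -/(_ / dl) ler_pdivlMr.
have hX := ax0 x; have hB := ax0 bm; have hP := exprn_ge0 p (ax0 cm).
have hCB : 0 <= C' * abs bm by apply: mulr_ge0 => //; exact: ltW.
have hux : 0 <= dl^-1 * abs x by apply: mulr_ge0 => //; exact: ltW.
move=> i; rewrite /ext; case: unlift => [j|].
  apply: le_trans (Hdb j) _; apply: le_trans (ler_wpM2l (ltW C0) Hyb) _.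
  nra.
nra.
Qed.

End Decomp.

Section Final.
Variables (R : realType) (k : fieldType) (abs : k -> R) (p n : nat) (r : 'I_n -> R).
Hypotheses (Habs : nonarch_abs abs) (Hp : p \in [pchar k]) (Hr : forall i, 0 < r i).
Local Notation PS := (PS k n).
Local Notation tate := (tate_series abs r).

Lemma mdiv_aux (mu al : mindex n) : mle al [ffun _ => p.-1] ->
  mdiv p (madd (mscale p mu) al) = mu.
Proof.
move=> /mleP H; have p0 := p_gt0 Hp; apply/ffunP => i; rewrite !ffunE.
have := H i; rewrite ffunE => hi.
rewrite mulnC divnMDl // divn_small ?addn0 //.
by rewrite -(prednK p0) ltnS.
Qed.

Lemma tate_G m (cf : k -> 'I_m -> k) C (a : PS) (al : mindex n) (j : 'I_m) :
  0 < C -> (forall x i, abs (cf x i) ^+ p <= C * abs x) -> tate a ->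
  mle al [ffun _ => p.-1] ->
  tate ((fun mu => cf (a (madd (mscale p mu) al)) j) : PS).
Proof.
move=> C0 Hb Ha Hal; have p0 := p_gt0 Hp.
apply: tate_in => eps e0.
have ra0 := rho_gt0 Hr al.
have ep0 : 0 < eps ^+ p by apply: exprn_gt0.
have e'0 : 0 < eps ^+ p * rho r al / C by apply: divr_gt0 => //; apply: mulr_gt0.
have [s Hs] := tate_out Ha e'0.
exists [seq mdiv p x | x <- s] => mu Hmu.
pose nu := madd (mscale p mu) al.
have Hnu : nu \notin s.
  apply/negP => H; move: Hmu; by rewrite -(mdiv_aux mu Hal) (map_f (mdiv p) H).
have h3 := Hs nu Hnu.
rewrite ltNge; apply/negP => H.
set g := abs _ in H.
have g0 : 0 <= g by apply: abs_ge0.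
have q0 := rho_gt0 Hr mu.
have e1 : eps ^+ p <= (g * rho r mu) ^+ p.
  have h0 : 0 <= g * rho r mu by apply: ltW (lt_le_trans e0 H).
  by apply: lerXn2r; rewrite ?nnegrE // ltW.
have e2 : g ^+ p <= C * abs (a nu) by rewrite /g -(absX Habs) (absX Habs); apply: Hb.
rewrite /nu rho_add rho_scale in h3.
rewrite exprMn in e1.
set Qp := rho r mu ^+ p in e1 h3.
set ra := rho r al in h3 e'0 ra0.
set An := abs (a (madd (mscale p mu) al)) in e2 h3.
have Qp0 : 0 < Qp by apply: exprn_gt0.
have An0 : 0 <= An by apply: abs_ge0.
rewrite ltr_pdivlMr // in h3.
have e3 : eps ^+ p <= C * An * Qp.
  apply: le_trans e1 _; apply: ler_wpM2r; [exact: ltW | exact: e2].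
have e4 : eps ^+ p * ra <= C * An * Qp * ra by apply: ler_wpM2r => //; exact: ltW.
have : An * (Qp * ra) * C = C * An * Qp * ra by ring.
lra.
Qed.

End Final.

Theorem lemma2p15 (R : realType) (k : fieldType) (abs : k -> R) (p n : nat)
    (r : 'I_n -> R) :
  nonarch_abs abs -> abs_complete abs ->
  p \in [pchar k] ->
  (forall i, 0 < r i) ->
  finite_p_degree k p ->
  kaehler_zero (tate_series abs r) (@is_poly k n).
Proof.
move=> Habs Hcomp Hp Hr [m [b Hb]].
have [C [C0 HC]] := bounded_ex Habs Hcomp Hp b.
have Hc : forall x, exists c : 'I_m -> k, x = \sum_(i < m) c i ^+ p * b i /\
    forall i, abs (c i) ^+ p <= C * abs x.
  by move=> x; apply: HC; apply: Hb.
have [cf Hcf] := choice Hc.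
pose A := (tate_series abs r : PS k n -> Prop).
pose B := (@is_poly k n : PS k n -> Prop).
have A0 : A 0 := tate_zero Habs r.
have A1 : A 1 := tate_one Habs r.
have AD : forall x y, A x -> A y -> A (x + y) by move=> x y; apply: tate_add.
have AM : forall x y, A x -> A y -> A (x * y) by move=> x y; apply: tate_mul.
have B0 : B 0 by exists [::].
move=> a Ha.
suff : inN A B (E (a : PS k n)).
  by case=> l [H1 H2]; exists l; split => //.
have Hd := decomp (n := n) (c := fun j x => cf x j) a Hp (fun x => (Hcf x).1).
rewrite [in E a]Hd.
have key : forall j : 'I_m, true -> A (\sum_(al <- Sbox [ffun _ => p.-1])
        M (b j) al * ((fun mu => cf (a (madd (mscale p mu) al)) j) : PS k n) ^+ p) /\
    inN A B (E (\sum_(al <- Sbox [ffun _ => p.-1])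
        M (b j) al * ((fun mu => cf (a (madd (mscale p mu) al)) j) : PS k n) ^+ p)).
  move=> j _; rewrite big_seq; apply: (N_sum A0 A1 AD B0) => al; rewrite memS => Hal.
  have HG := tate_G Habs Hp Hr (cf := cf) (a := a) (al := al) j C0 (fun x i => (Hcf x).2 i) Ha Hal.
  split; first by apply: (AM); [exact: tate_M | exact: (AX A1 AM)].
  apply: (N_term A1 AM Hp) => //; first exact: tate_M.
  by exists [:: al] => nu; rewrite inE /M => /negbTE ->.
exact: (N_sum A0 A1 AD B0 _ key).2.
Qed.
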